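(* Let $q\ge5$ be prime and $r,s\ge2$ integers. Then $\chi_D(LG_q\otimes K_{r,s})=r+s+1$.
   Context: Let $V=\mathbb{F}_q^3$, $\mathcal{P}$ the set of $1$-dimensional subspaces (''points'') and $\mathcal{L}$ the set of $2$-dimensional subspaces (''lines'') of $V$. The graph $LG_q\otimes K_{r,s}$ has vertex set $(\mathcal{P}\times[r])\sqcup(\mathcal{L}\times[s])$, where $[m]=\{1,\dots,m\}$, and for $p\in\mathcal{P}$, $l\in\mathcal{L}$, $i\in[r]$, $j\in[s]$, the vertex $(p,i)$ is adjacent to $(l,j)$ iff $p\subset l$; there are no other edges. A coloring is distinguishing if the only graph automorphism mapping every color class onto itself is the identity; $\chi_D(G)$ is the minimum number of colors of a proper distinguishing coloring of $G$. *)

(* Defs.v *)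
From HB Require Import structures.
From mathcomp Require Import all_boot all_order all_algebra all_fingroup.
Set Implicit Arguments. Unset Strict Implicit. Unset Printing Implicit Defensive.

Local Open Scope ring_scope.

Definition is_graph_aut (T : finType) (e : rel T) (f : {perm T}) : Prop :=
  forall x y, e (f x) (f y) = e x y.

Definition proper_coloring (T : finType) (e : rel T) (k : nat) (c : T -> 'I_k) : Prop :=
  forall x y, e x y -> c x != c y.

(* distinguishing: the only automorphism mapping every color class onto itself
   (equivalently, preserving the color of every vertex) is the identity *)
Definition distinguishing (T : finType) (e : rel T) (k : nat) (c : T -> 'I_k) : Prop :=
  forall f : {perm T}, is_graph_aut e f -> (forall x, c (f x) = c x) -> f = 1%g.

Definition proper_dist_colorable (T : finType) (e : rel T) (k : nat) : Prop :=
  exists c : T -> 'I_k, proper_coloring e c /\ distinguishing e c.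

Definition chiD_is (T : finType) (e : rel T) (n : nat) : Prop :=
  proper_dist_colorable e n /\ (forall k, (k < n)%N -> ~ proper_dist_colorable e k).

Notation vec q := 'rV['F_q]_3.

Definition span_set (q : nat) (A : 'M['F_q]_3) : {set vec q} :=
  [set x : vec q | (x <= A)%MS].

Definition is_subspace_of_dim (q d : nat) (S : {set vec q}) : bool :=
  [exists A : 'M['F_q]_3, (\rank A == d) && (S == span_set A)].

Definition raw_vertex (q r s : nat) : finType :=
  (({set vec q} * 'I_r) + ({set vec q} * 'I_s))%type.

Definition valid_vertex (q r s : nat) (x : raw_vertex q r s) : bool :=
  match x with
  | inl (p, _) => @is_subspace_of_dim q 1%N p
  | inr (l, _) => @is_subspace_of_dim q 2%N l
  end.

(* vertex set of LG_q (x) K_{r,s} : (P x [r]) + (L x [s]) *)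
Definition LGK_vertex (q r s : nat) : finType := {x : raw_vertex q r s | valid_vertex x}.

Definition raw_adj (q r s : nat) (x y : raw_vertex q r s) : bool :=
  match x, y with
  | inl (p, _), inr (l, _) => p \subset l
  | inr (l, _), inl (p, _) => p \subset l
  | _, _ => false
  end.

Definition LGK_adj (q r s : nat) : rel (LGK_vertex q r s) :=
  fun x y => raw_adj (val x) (val y).

(* Main.v *)
Require Import Defs.
From HB Require Import structures.
From mathcomp Require Import all_boot all_order all_algebra all_fingroup.
From mathcomp Require Import ring zify.
Set Implicit Arguments. Unset Strict Implicit. Unset Printing Implicit Defensive.
Import GRing.Theory.

Section LinAlg.
Local Open Scope ring_scope.
Variable q : nat.
Local Notation K := 'F_q.

Lemma span_sub (A B : 'M[K]_3) :
  (span_set A \subset span_set B) = (A <= B)%MS.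
Proof.
apply/subsetP/idP => [H | H x].
- apply/row_subP => i. have := H (row i A). rewrite !inE. apply. exact: row_sub.
- rewrite !inE => Hx. exact: submx_trans Hx H.
Qed.

Lemma span_eq_rank (A B : 'M[K]_3) :
  (A <= B)%MS -> (\rank B <= \rank A)%N -> span_set A = span_set B.
Proof.
move=> AB rBA. have /eqmxP E : (A == B)%MS.
  by rewrite -(mxrank_leqif_eq AB) eqn_leq rBA mxrankS.
by apply/setP => x; rewrite !inE E.
Qed.

Lemma sdim_span d (S : {set vec q}) :
  is_subspace_of_dim d S -> exists2 A : 'M[K]_3, \rank A = d & S = span_set A.
Proof. by move=> /existsP [A /andP [/eqP r /eqP ->]]; exists A. Qed.

Lemma sub_same_dim d (S T : {set vec q}) :
  is_subspace_of_dim d S -> is_subspace_of_dim d T -> S \subset T -> S = T.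
Proof.
move=> /sdim_span [A rA ->] /sdim_span [B rB ->]; rewrite span_sub => AB.
by apply: span_eq_rank; rewrite ?rA ?rB.
Qed.

Lemma addsmx_sub_gen (A1 A2 B : 'M[K]_3) : (A1 <= B)%MS -> (A2 <= B)%MS -> (A1 + A2 <= B)%MS.
Proof. by move=> h1 h2; rewrite addsmx_sub h1 h2. Qed.

Lemma two_points_one_line (p1 p2 l1 l2 : {set vec q}) :
  is_subspace_of_dim 1 p1 -> is_subspace_of_dim 1 p2 ->
  is_subspace_of_dim 2 l1 -> is_subspace_of_dim 2 l2 -> p1 != p2 ->
  p1 \subset l1 -> p2 \subset l1 -> p1 \subset l2 -> p2 \subset l2 -> l1 = l2.
Proof.
move=> /sdim_span [A1 r1 ->] /sdim_span [A2 r2 ->] /sdim_span [B1 s1 ->] /sdim_span [B2 s2 ->] ne.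
rewrite !span_sub => a1 a2 b1 b2.
have r12 : \rank (A1 + A2)%MS = 2%N.
  apply/eqP; rewrite eqn_leq; apply/andP; split.
    have := mxrankS (addsmx_sub_gen a1 a2); by rewrite s1.
  rewrite ltnNge; apply/negP => le1.
  have sub1 : (A1 + A2 <= A1)%MS.
    rewrite -(mxrank_leqif_sup (addsmxSl A1 A2)) r1 eqn_leq le1 andbT.
    have := mxrankS (addsmxSl A1 A2); by rewrite r1.
  have sub2 : (A2 <= A1)%MS := submx_trans (addsmxSr A1 A2) sub1.
  move: ne; rewrite (span_eq_rank sub2) ?r1 ?r2 //; by rewrite eqxx.
have e1 : span_set (A1 + A2)%MS = span_set B1.
  by apply: span_eq_rank; rewrite ?r12 ?s1 // addsmx_sub a1 a2.
have e2 : span_set (A1 + A2)%MS = span_set B2.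
  by apply: span_eq_rank; rewrite ?r12 ?s2 // addsmx_sub b1 b2.
by rewrite -e1 e2.
Qed.

Definition rv3 (a b c : K) : 'rV[K]_3 := \row_(i < 3) nth 0 [:: a; b; c] i.
Definition cv3 (a b c : K) : 'cV[K]_3 := \col_(i < 3) nth 0 [:: a; b; c] i.
Definition pt (v : 'rV[K]_3) : {set vec q} := span_set <<v>>%MS.
Definition ln (n : 'cV[K]_3) : {set vec q} := span_set (kermx n).

Lemma pt_dim v : v != 0 -> is_subspace_of_dim 1 (pt v).
Proof.
move=> nz; apply/existsP; exists (<<v>>%MS); apply/andP; split=> //.
by rewrite genmxE rank_rV nz.
Qed.

Lemma ln_dim n : n != 0 -> is_subspace_of_dim 2 (ln n).
Proof.
move=> nz; apply/existsP; exists (kermx n); rewrite eqxx andbT mxrank_ker.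
have : (\rank n <= 1)%N by apply: rank_leq_col.
have : \rank n != 0%N by rewrite mxrank_eq0.
by case: (\rank n) => [|[|]].
Qed.

Lemma inc_ptln v n : (pt v \subset ln n) = (v *m n == 0).
Proof. by rewrite span_sub genmxE sub_kermx. Qed.

Lemma dot3 a b c x y z : rv3 a b c *m cv3 x y z = (a * x + b * y + c * z)%:M.
Proof.
apply/matrixP => i j; rewrite !ord1 !mxE !big_ord_recr big_ord0 /= !mxE /=.
by rewrite add0r mulr1n.
Qed.

Lemma inc3 a b c x y z : (pt (rv3 a b c) \subset ln (cv3 x y z)) = (a * x + b * y + c * z == 0).
Proof.
rewrite inc_ptln dot3; apply/eqP/eqP => [H | ->]; last by apply/matrixP => i j; rewrite !ord1 !mxE.
by have := congr1 (fun M : 'M[K]_1 => M 0 0) H; rewrite !mxE /= mulr1n.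
Qed.


Lemma pt_of_dim1 (S : {set vec q}) : is_subspace_of_dim 1 S -> exists2 v, v != 0 & S = pt v.
Proof.
move=> /sdim_span [A rA ->]; exists (nz_row A).
  by rewrite nz_row_eq0 -mxrank_eq0 rA.
rewrite /pt; symmetry; apply: span_eq_rank; first by rewrite genmxE nz_row_sub.
by rewrite genmxE rank_rV nz_row_eq0 -mxrank_eq0 rA.
Qed.

Lemma pt_scale (k : K) v : k != 0 -> pt (k *: v) = pt v.
Proof. by move=> nz; apply/setP => x; rewrite !inE !genmxE (eqmx_scale _ nz). Qed.

Lemma in_pt v : v \in pt v.
Proof. by rewrite inE genmxE submx_refl. Qed.

Lemma pt_sub v (S : {set vec q}) : is_subspace_of_dim 2 S -> v \in S -> pt v \subset S.
Proof.
move=> /sdim_span [B _ ->]; rewrite inE => vB.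
by rewrite span_sub genmxE.
Qed.

Lemma rv3E (v : 'rV[K]_3) : v = rv3 (v 0 0) (v 0 1) (v 0 2%:R).
Proof.
apply/matrixP => i j; rewrite !ord1 mxE.
by case: j => [[|[|[|]]] ?] //=; congr (v _ _); apply: val_inj.
Qed.

Lemma scale_rv3 k a b c : k *: rv3 a b c = rv3 (k * a) (k * b) (k * c).
Proof. by apply/matrixP => i j; rewrite !mxE; case: j => [[|[|[|]]] ?] //=; rewrite mulr0. Qed.

Lemma rv3_eq0 a b c : (rv3 a b c == 0) = [&& a == 0, b == 0 & c == 0].
Proof.
apply/eqP/and3P => [H | [/eqP -> /eqP -> /eqP ->]].
  have h0 := congr1 (fun M : 'rV[K]_3 => M 0 0) H.
  have h1 := congr1 (fun M : 'rV[K]_3 => M 0 1) H.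
  have h2 := congr1 (fun M : 'rV[K]_3 => M 0 2%:R) H.
  by move: h0 h1 h2; rewrite !mxE /= => -> -> ->.
by apply/matrixP => i j; rewrite !mxE; case: j => [[|[|[|]]] ?].
Qed.

Lemma cv3_eq0 a b c : (cv3 a b c == 0) = [&& a == 0, b == 0 & c == 0].
Proof.
apply/eqP/and3P => [H | [/eqP -> /eqP -> /eqP ->]].
  have h0 := congr1 (fun M : 'cV[K]_3 => M 0 0) H.
  have h1 := congr1 (fun M : 'cV[K]_3 => M 1 0) H.
  have h2 := congr1 (fun M : 'cV[K]_3 => M 2%:R 0) H.
  by move: h0 h1 h2; rewrite !mxE /= => -> -> ->.
by apply/matrixP => i j; rewrite !mxE; case: i => [[|[|[|]]] ?].
Qed.

Lemma pt_normal (S : {set vec q}) : is_subspace_of_dim 1 S ->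
  [\/ exists a b, S = pt (rv3 a b 1),
      exists c, S = pt (rv3 1 c 0) | S = pt (rv3 0 1 0)].
Proof.
move=> /pt_of_dim1 [v nz ->]; rewrite (rv3E v) in nz *.
move: (v 0 0) (v 0 1) (v 0 2%:R) nz => a b c nz.
have [c0|cn0] := eqVneq c 0.
  have [a0|an0] := eqVneq a 0.
    have [b0|bn0] := eqVneq b 0; first by move: nz; rewrite rv3_eq0 a0 b0 c0 !eqxx.
    apply: Or33; rewrite -(pt_scale _ (invr_neq0 bn0)) scale_rv3 a0 c0 mulr0 mulVf //.
  apply: Or32; exists (a^-1 * b).
  by rewrite -(pt_scale _ (invr_neq0 an0)) scale_rv3 c0 mulr0 mulVf //.
apply: Or31; exists (c^-1 * a), (c^-1 * b).
by rewrite -(pt_scale _ (invr_neq0 cn0)) scale_rv3 mulVf //.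
Qed.

End LinAlg.

Section More.
Local Open Scope ring_scope.
Variable q : nat.
Local Notation K := 'F_q.

Lemma rank_two (A1 A2 : 'M[K]_3) : \rank A1 = 1%N -> \rank A2 = 1%N ->
  span_set A1 != span_set A2 -> \rank (A1 + A2)%MS = 2%N.
Proof.
move=> r1 r2 ne.
apply/eqP; rewrite eqn_leq; apply/andP; split.
  have := mxrank_sum_cap A1 A2; rewrite r1 r2 => h.
  have : (\rank (A1 + A2)%MS <= 1 + 1)%N by rewrite -h leq_addr.
  by [].
rewrite ltnNge; apply/negP => le1.
have sub1 : (A1 + A2 <= A1)%MS.
  rewrite -(mxrank_leqif_sup (addsmxSl A1 A2)) r1 eqn_leq le1 andbT.
  have := mxrankS (addsmxSl A1 A2); by rewrite r1.
have sub2 : (A2 <= A1)%MS := submx_trans (addsmxSr A1 A2) sub1.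
move: ne; rewrite (span_eq_rank sub2) ?r1 ?r2 //; by rewrite eqxx.
Qed.

Lemma line_sep (p p' : {set vec q}) : is_subspace_of_dim 1 p -> is_subspace_of_dim 1 p' ->
  p != p' -> exists l, [/\ is_subspace_of_dim 2 l, p \subset l & ~~ (p' \subset l)].
Proof.
move=> /sdim_span [A rA ->] /sdim_span [B rB ->] ne.
have rAB := rank_two rA rB ne.
set C := ((A + B)%MS)^C%MS.
have rC : \rank C = 1%N by rewrite mxrank_compl rAB.
have cap0 : \rank (A :&: C)%MS = 0%N.
  apply/eqP; rewrite mxrank_eq0 -submx0 -(capmx_compl (A + B)%MS).
  by apply: capmxS => //; exact: addsmxSl.
have rAC : \rank (A + C)%MS = 2%N.
  by have := mxrank_sum_cap A C; rewrite cap0 rA rC addn0.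
exists (span_set (A + C)%MS); split.
- by apply/existsP; exists (A + C)%MS; rewrite rAC !eqxx.
- by rewrite span_sub addsmxSl.
- rewrite span_sub; apply/negP => BAC.
  have : (A + B + C <= A + C)%MS by rewrite !addsmx_sub addsmxSl BAC addsmxSr.
  move/mxrankS; have := addsmx_compl_full (A + B)%MS; rewrite /row_full => /eqP ->.
  by rewrite rAC.
Qed.

Lemma point_sep (l l' : {set vec q}) : is_subspace_of_dim 2 l -> is_subspace_of_dim 2 l' ->
  l != l' -> exists p, [/\ is_subspace_of_dim 1 p, p \subset l & ~~ (p \subset l')].
Proof.
move=> hl hl' ne.
have : ~~ (l \subset l') by apply/negP => sub; move: ne; rewrite (sub_same_dim hl hl' sub) eqxx.
case/subsetPn => x xl xl'.
have nz : x != 0.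
  apply/negP => /eqP x0; move: xl'; case/sdim_span: hl' => B _ ->; by rewrite inE x0 sub0mx.
exists (pt x); split; first exact: pt_dim.
- exact: pt_sub.
- by apply/negP => /subsetP /(_ x (in_pt x)); apply/negP.
Qed.

End More.

Section Sigma.
Local Open Scope ring_scope.
Variable q : nat.
Local Notation K := 'F_q.

Definition Tm : 'M[K]_3 := tperm_mx 0 1.

Lemma TmK : Tm *m Tm = 1%:M.
Proof. by rewrite /Tm /tperm_mx -perm_mxM tperm2 perm_mx1. Qed.

Lemma Tm_unit : Tm \in unitmx.
Proof. exact: unitmx_perm. Qed.

Definition sig (S : {set vec q}) : {set vec q} := [set x | x *m Tm \in S].

Lemma sigK S : sig (sig S) = S.
Proof. by apply/setP => x; rewrite !inE -mulmxA TmK mulmx1. Qed.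

Lemma sig_inj : injective sig.
Proof. exact: (can_inj sigK). Qed.

Lemma sig_span (A : 'M[K]_3) : sig (span_set A) = span_set (A *m Tm).
Proof.
apply/setP => x; rewrite !inE; apply/idP/idP => h.
  by have := submxMr Tm h; rewrite -mulmxA TmK mulmx1.
by have := submxMr Tm h; rewrite -mulmxA TmK mulmx1.
Qed.

Lemma sig_dim d S : is_subspace_of_dim d S -> is_subspace_of_dim d (sig S).
Proof.
move=> /sdim_span [A rA ->]; apply/existsP; exists (A *m Tm).
by rewrite sig_span eqxx mxrankMfree ?row_free_unit ?Tm_unit // rA eqxx.
Qed.

Lemma sig_sub S S' : (sig S \subset sig S') = (S \subset S').
Proof.
apply/idP/idP => h; last by apply/subsetP => x; rewrite !inE => /(subsetP h).
apply/subsetP => x xS; have := subsetP h (x *m Tm); rewrite !inE -mulmxA TmK mulmx1.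
exact.
Qed.

Lemma sig_pt (v : 'rV[K]_3) : sig (pt v) = pt (v *m Tm).
Proof.
rewrite /pt sig_span; apply/setP => x; rewrite !inE genmxE.
by rewrite (eqmxMr Tm (genmxE v)).
Qed.

Lemma sigX : sig (pt (rv3 1 0 0)) = pt (rv3 0 1 0).
Proof.
rewrite sig_pt -xcolE; congr pt; apply/matrixP => i j; rewrite !mxE.
by case: j => [[|[|[|]]] ?] //=; rewrite permE /=.
Qed.

Lemma join_ex2 (p p' : {set vec q}) : is_subspace_of_dim 1 p -> is_subspace_of_dim 1 p' ->
  p != p' -> exists l, [/\ is_subspace_of_dim 2 l, p \subset l & p' \subset l].
Proof.
move=> /sdim_span [A rA ->] /sdim_span [B rB ->] ne.
exists (span_set (A + B)%MS); split.
- by apply/existsP; exists (A + B)%MS; rewrite (rank_two rA rB ne) !eqxx.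
- by rewrite span_sub addsmxSl.
- by rewrite span_sub addsmxSr.
Qed.

Lemma meet_ex (l l' : {set vec q}) : is_subspace_of_dim 2 l -> is_subspace_of_dim 2 l' ->
  exists p, [/\ is_subspace_of_dim 1 p, p \subset l & p \subset l'].
Proof.
move=> /sdim_span [A rA ->] /sdim_span [B rB ->].
set C := (A :&: B)%MS.
have rC : (0 < \rank C)%N.
  have := mxrank_sum_cap A B; rewrite rA rB.
  have : (\rank (A + B)%MS <= 3)%N by apply: rank_leq_col.
  move=> h1 h2; rewrite lt0n; apply/eqP => h3; move: h2; rewrite h3 addn0 => h4.
  by move: h1; rewrite h4.
have nz : nz_row C != 0 by rewrite nz_row_eq0 -mxrank_eq0 -lt0n.
exists (pt (nz_row C)); split; first exact: pt_dim.
- rewrite span_sub genmxE; apply: submx_trans (nz_row_sub C) _; exact: capmxSl.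
- rewrite span_sub genmxE; apply: submx_trans (nz_row_sub C) _; exact: capmxSr.
Qed.

End Sigma.


Section Graph.
Variables q r s : nat.
Local Notation V := (LGK_vertex q r s).
Local Notation adj := (@LGK_adj q r s).
Local Notation dim1 := (@is_subspace_of_dim q 1).
Local Notation dim2 := (@is_subspace_of_dim q 2).

Definition isP (v : V) : bool := if val v is inl _ then true else false.
Definition sub (v : V) : {set vec q} :=
  match val v with inl (p, _) => p | inr (l, _) => l end.
Definition idx (v : V) : nat :=
  match val v with inl (_, i) => nat_of_ord i | inr (_, j) => nat_of_ord j end.

Lemma subP (v : V) : isP v -> dim1 (sub v).
Proof. by case: v => [[[p i]|[l j]] h]. Qed.

Lemma subL (v : V) : ~~ isP v -> dim2 (sub v).
Proof. by case: v => [[[p i]|[l j]] h]. Qed.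

Lemma adjE (u v : V) : adj u v =
  if isP u then ~~ isP v && (sub u \subset sub v) else isP v && (sub v \subset sub u).
Proof. by case: u v => [[[p i]|[l j]] h] [[[p' i']|[l' j']] h']. Qed.

Lemma vertex_eq (u v : V) : isP u = isP v -> sub u = sub v -> idx u = idx v -> u = v.
Proof.
case: u v => [[[p i]|[l j]] h] [[[p' i']|[l' j']] h'] //=; rewrite /sub /idx /= => _ e1 e2;
by apply: val_inj; rewrite /= e1 (val_inj e2).
Qed.

Lemma idx_ltP (v : V) : isP v -> (idx v < r)%N.
Proof. by case: v => [[[p i]|[l j]] h] //= _; exact: ltn_ord. Qed.

Lemma idx_ltL (v : V) : ~~ isP v -> (idx v < s)%N.
Proof. by case: v => [[[p i]|[l j]] h] //= _; exact: ltn_ord. Qed.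

Definition mkP (p : {set vec q}) (h : dim1 p) (i : 'I_r) : V :=
  @exist (raw_vertex q r s) (fun x => valid_vertex x) (inl (p, i)) h.
Definition mkL (l : {set vec q}) (h : dim2 l) (j : 'I_s) : V :=
  @exist (raw_vertex q r s) (fun x => valid_vertex x) (inr (l, j)) h.

Lemma mkP_isP p h i : isP (@mkP p h i). Proof. by []. Qed.
Lemma mkL_isP l h j : isP (@mkL l h j) = false. Proof. by []. Qed.
Lemma mkP_sub p h i : sub (@mkP p h i) = p. Proof. by []. Qed.
Lemma mkL_sub l h j : sub (@mkL l h j) = l. Proof. by []. Qed.
Lemma mkP_idx p h i : idx (@mkP p h i) = i. Proof. by []. Qed.
Lemma mkL_idx l h j : idx (@mkL l h j) = j. Proof. by []. Qed.

End Graph.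

Section Aut.
Variables q r s : nat.
Hypotheses (hr : (0 < r)%N) (hs : (0 < s)%N).
Local Notation V := (LGK_vertex q r s).
Local Notation adj := (@LGK_adj q r s).
Local Notation dim1 := (@is_subspace_of_dim q 1).
Local Notation dim2 := (@is_subspace_of_dim q 2).
Local Notation mkP := (@mkP q r s).
Local Notation mkL := (@mkL q r s).
Local Notation isP := (@isP q r s).
Local Notation sub := (@sub q r s).
Local Notation idx := (@idx q r s).
Variable f : {perm V}.
Hypothesis hf : is_graph_aut adj f.
Hypothesis hside : forall v, isP (f v) = isP v.

Definition i0 : 'I_r := Ordinal hr.
Definition j0 : 'I_s := Ordinal hs.

Definition fixd (b : bool) (S : {set vec q}) :=
  forall v : V, isP v = b -> sub v = S -> sub (f v) = S.

Lemma inc_f (u w : V) : isP u -> ~~ isP w -> sub u \subset sub w -> sub (f u) \subset sub (f w).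
Proof.
move=> pu lw sw; have : adj u w by rewrite adjE pu lw.
by rewrite -hf adjE hside pu hside (negbTE lw) /=.
Qed.

Lemma join_fix p1 p2 l : dim1 p1 -> dim1 p2 -> dim2 l -> p1 != p2 ->
  p1 \subset l -> p2 \subset l -> fixd true p1 -> fixd true p2 -> fixd false l.
Proof.
move=> h1 h2 hl ne s1 s2 f1 f2 v lv sv.
have lv' : ~~ isP v by rewrite lv.
have t1 : sub (f (mkP h1 i0)) \subset sub (f v) by apply: inc_f => //; rewrite sv.
have t2 : sub (f (mkP h2 i0)) \subset sub (f v) by apply: inc_f => //; rewrite sv.
rewrite (f1 (mkP h1 i0) erefl erefl) in t1; rewrite (f2 (mkP h2 i0) erefl erefl) in t2.
apply: (two_points_one_line h1 h2 _ hl ne t1 t2 s1 s2).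
by apply: subL; rewrite hside.
Qed.

Lemma meet_fix p l1 l2 : dim1 p -> dim2 l1 -> dim2 l2 -> l1 != l2 ->
  p \subset l1 -> p \subset l2 -> fixd false l1 -> fixd false l2 -> fixd true p.
Proof.
move=> hp h1 h2 ne s1 s2 f1 f2 v pv sv.
have t1 : sub (f v) \subset sub (f (mkL h1 j0)) by apply: inc_f => //; rewrite sv.
have t2 : sub (f v) \subset sub (f (mkL h2 j0)) by apply: inc_f => //; rewrite sv.
rewrite (f1 (mkL h1 j0) erefl erefl) in t1; rewrite (f2 (mkL h2 j0) erefl erefl) in t2.
apply/eqP/negPn/negP => ne'.
move/eqP: ne; apply.
apply: (two_points_one_line _ hp h1 h2 ne' t1 s1 t2 s2).
by apply: subP; rewrite hside.
Qed.

Lemma twinP (u u' : V) : isP u -> isP u' -> sub u = sub u' -> sub (f u) = sub (f u').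
Proof.
move=> pu pu' e; apply/eqP/negPn/negP => ne.
have fu : isP (f u) by rewrite hside.
have fu' : isP (f u') by rewrite hside.
case: (line_sep (subP fu) (subP fu') ne) => l [hl s1 s2].
set w := mkL hl j0.
have lw : ~~ isP ((f^-1)%g w).
  by rewrite -hside permKV.
have a1 : adj (f u) (f ((f^-1)%g w)) by rewrite permKV adjE fu /= s1.
rewrite hf adjE pu lw /= e in a1.
have : adj u' ((f^-1)%g w) by rewrite adjE pu' lw.
by rewrite -hf permKV adjE fu' /= (negbTE s2).
Qed.

Lemma twinL (u u' : V) : ~~ isP u -> ~~ isP u' -> sub u = sub u' -> sub (f u) = sub (f u').
Proof.
move=> pu pu' e; apply/eqP/negPn/negP => ne.
have fu : ~~ isP (f u) by rewrite hside.
have fu' : ~~ isP (f u') by rewrite hside.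
case: (point_sep (subL fu) (subL fu') ne) => p [hp s1 s2].
set w := mkP hp i0.
have lw : isP ((f^-1)%g w) by rewrite -hside permKV.
have a1 : adj (f ((f^-1)%g w)) (f u) by rewrite permKV adjE /= fu s1.
rewrite hf adjE lw pu /= e in a1.
have : adj ((f^-1)%g w) u' by rewrite adjE lw pu'.
by rewrite -hf permKV adjE /= fu' (negbTE s2).
Qed.

End Aut.


Definition colF (e L k base : nat) : nat :=
  if ((L == 1) && (k == 0)) || ((L == 2) && (k == 1)) then e else (base + k)%N.

Lemma colF_inj e L k k' base : (base + k < e)%N -> (base + k' < e)%N ->
  colF e L k base = colF e L k' base -> k = k'.
Proof.
rewrite /colF => h1 htwo.
case: L => [|[|[|L]]] /=;
case: k h1 => [|[|k]] h1; case: k' htwo => [|[|k']] htwo //= ; lia.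
Qed.

Lemma colF_label e L L' k0 k1 base : (base + 1 < e)%N -> (base + k0 < e)%N -> (base + k1 < e)%N ->
  (L < 3)%N -> (L' < 3)%N -> L != 0%N ->
  colF e L' k0 base = colF e L 0 base -> colF e L' k1 base = colF e L 1 base -> L' = L.
Proof.
rewrite /colF => h h0 h1.
case: L => [|[|[|L]]] //=; case: L' => [|[|[|L']]] //= _ _ _;
case: k0 h0 => [|[|k0]] h0; case: k1 h1 => [|[|k1]] h1 //=; lia.
Qed.

Lemma colF_e e L k base : (base + k < e)%N -> colF e L k base = e ->
  ((L == 1) && (k == 0)) || ((L == 2) && (k == 1)).
Proof. rewrite /colF; case: ifP => // _ h; lia. Qed.

Section Upper.
Variables q r s : nat.
Hypotheses (hr : (2 <= r)%N) (hs : (2 <= s)%N).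
Local Open Scope ring_scope.
Hypothesis htwo : (2%:R : 'F_q) != 0.
Local Notation K := 'F_q.
Local Notation V := (LGK_vertex q r s).
Local Notation adj := (@LGK_adj q r s).
Local Notation dim1 := (@is_subspace_of_dim q 1).
Local Notation dim2 := (@is_subspace_of_dim q 2).
Local Notation mkP := (@mkP q r s).
Local Notation mkL := (@mkL q r s).
Local Notation isP := (@isP q r s).
Local Notation sub := (@sub q r s).
Local Notation idx := (@idx q r s).
Local Notation pt := (@pt q).
Local Notation ln := (@ln q).
Local Notation rv3 := (@rv3 q).
Local Notation cv3 := (@cv3 q).

Definition O := pt (rv3 0 0 1).
Definition E := pt (rv3 1 0 1).
Definition W := pt (rv3 0 1 1).
Definition Wp := pt (rv3 1 1 1).
Definition X := pt (rv3 1 0 0).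
Definition Y := pt (rv3 0 1 0).
Definition Linf := ln (cv3 0 0 1).
Definition L2 := ln (cv3 1 0 1).
Definition OY := ln (cv3 1 0 0).
Definition OE := ln (cv3 0 1 0).
Definition WX := ln (cv3 0 1 (-1)).
Definition EY := ln (cv3 1 0 (-1)).

Definition plabel (p : {set vec q}) : nat :=
  if p == O then 1%N else if (p == E) || (p == W) then 2%N else 0%N.
Definition llabel (l : {set vec q}) : nat :=
  if l == Linf then 1%N else if l == L2 then 2%N else 0%N.

Definition colN (v : V) : nat :=
  if isP v then colF (r + s) (plabel (sub v)) (idx v) 0
  else colF (r + s) (llabel (sub v)) (idx v) r.

Lemma colN_lt v : (colN v < r + s + 1)%N.
Proof.
rewrite /colN /colF; case: ifP => pv; case: ifP => _; rewrite ?addn1 ?ltnS //.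
  by have := idx_ltP pv; lia.
by have := idx_ltL (negbT pv); lia.
Qed.

Definition colV (v : V) : 'I_(r + s + 1) := Ordinal (colN_lt v).

Ltac simp := rewrite ?(mul0r, mulr0, mul1r, mulr1, add0r, addr0, mulN1r, mulrN1, opprK).

Lemma one_nz : (1 : K) != 0. Proof. exact: oner_neq0. Qed.
Lemma m1_nz : (-1 : K) != 0. Proof. by rewrite oppr_eq0 oner_neq0. Qed.

Lemma nzr a b c : (a != 0) || (b != 0) || (c != 0) -> rv3 a b c != 0.
Proof. by rewrite rv3_eq0 => /orP [/orP [] | ] h; apply/negP => /and3P [] /eqP x /eqP y /eqP z; move: h; rewrite ?x ?y ?z eqxx. Qed.
Lemma nzc a b c : (a != 0) || (b != 0) || (c != 0) -> cv3 a b c != 0.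
Proof. by rewrite cv3_eq0 => /orP [/orP [] | ] h; apply/negP => /and3P [] /eqP x /eqP y /eqP z; move: h; rewrite ?x ?y ?z eqxx. Qed.

Lemma ptne u v n : pt u \subset ln n -> ~~ (pt v \subset ln n) -> pt u != pt v.
Proof. by move=> h1 hb; apply/eqP => e; move: hb; rewrite -e h1. Qed.
Lemma lnne u n m : pt u \subset ln n -> ~~ (pt u \subset ln m) -> ln n != ln m.
Proof. by move=> h1 hb; apply/eqP => e; move: hb; rewrite -e h1. Qed.

Ltac unf := unfold O, E, W, Wp, X, Y, Linf, L2, OY, OE, WX, EY.
Ltac inc_t := unf; rewrite /= ?inc3; apply/eqP; ring.
Ltac ninc_t := unf; rewrite /= ?inc3; simp; rewrite ?one_nz ?m1_nz ?htwo //.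

Lemma dO : dim1 O. Proof. apply: pt_dim; apply: nzr; by rewrite one_nz orbT. Qed.
Lemma dE : dim1 E. Proof. apply: pt_dim; apply: nzr; by rewrite one_nz. Qed.
Lemma dW : dim1 W. Proof. apply: pt_dim; apply: nzr; by rewrite one_nz orbT. Qed.
Lemma dWp : dim1 Wp. Proof. apply: pt_dim; apply: nzr; by rewrite one_nz. Qed.
Lemma dX : dim1 X. Proof. apply: pt_dim; apply: nzr; by rewrite one_nz. Qed.
Lemma dY : dim1 Y. Proof. apply: pt_dim; apply: nzr; by rewrite one_nz orbT. Qed.
Lemma dLinf : dim2 Linf. Proof. apply: ln_dim; apply: nzc; by rewrite one_nz orbT. Qed.
Lemma dL2 : dim2 L2. Proof. apply: ln_dim; apply: nzc; by rewrite one_nz. Qed.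
Lemma dOY : dim2 OY. Proof. apply: ln_dim; apply: nzc; by rewrite one_nz. Qed.
Lemma dOE : dim2 OE. Proof. apply: ln_dim; apply: nzc; by rewrite one_nz orbT. Qed.
Lemma dWX : dim2 WX. Proof. apply: ln_dim; apply: nzc; by rewrite one_nz orbT. Qed.
Lemma dEY : dim2 EY. Proof. apply: ln_dim; apply: nzc; by rewrite one_nz. Qed.

Lemma nO_Linf : ~~ (O \subset Linf). Proof. ninc_t. Qed.
Lemma nO_L2 : ~~ (O \subset L2). Proof. ninc_t. Qed.
Lemma nE_Linf : ~~ (E \subset Linf). Proof. ninc_t. Qed.
Lemma nE_L2 : ~~ (E \subset L2). Proof. unf; rewrite /= inc3; simp. by rewrite -[1 + 1]/(2%:R). Qed.
Lemma nW_Linf : ~~ (W \subset Linf). Proof. ninc_t. Qed.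
Lemma nW_L2 : ~~ (W \subset L2). Proof. ninc_t. Qed.


Lemma OneE : O != E. Proof. by apply: (@ptne _ _ (cv3 1 0 0)); ninc_t; inc_t. Qed.
Lemma OneW : O != W. Proof. by apply: (@ptne _ _ (cv3 0 1 0)); [inc_t | ninc_t]. Qed.
Lemma EneW : E != W. Proof. by apply: (@ptne _ _ (cv3 0 1 0)); [inc_t | ninc_t]. Qed.
Lemma LinfneL2 : Linf != L2. Proof. by apply: (@lnne (rv3 1 0 0)); [inc_t | ninc_t]. Qed.

Lemma plabelO : plabel O = 1%N. Proof. by rewrite /plabel (eqxx O). Qed.
Lemma plabelE : plabel E = 2%N. Proof. by rewrite /plabel (eq_sym E O) (negbTE OneE) (eqxx E). Qed.
Lemma plabelW : plabel W = 2%N. Proof. by rewrite /plabel (eq_sym W O) (negbTE OneW) (eqxx W) orbT. Qed.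
Lemma llabelLinf : llabel Linf = 1%N. Proof. rewrite /llabel. by rewrite ifT. Qed.
Lemma llabelL2 : llabel L2 = 2%N. Proof. rewrite /llabel. rewrite ifF. by rewrite ifT. by rewrite eq_sym; exact: negbTE LinfneL2. Qed.

Lemma plabel_lt p : (plabel p < 3)%N. Proof. by rewrite /plabel; case: ifP => // _; case: ifP. Qed.
Lemma llabel_lt l : (llabel l < 3)%N. Proof. by rewrite /llabel; case: ifP => // _; case: ifP. Qed.

Lemma plabel1 p : plabel p = 1%N -> p = O.
Proof. by rewrite /plabel; case: ifP => [/eqP //|_]; case: ifP. Qed.
Lemma plabel2 p : plabel p = 2%N -> p = E \/ p = W.
Proof. rewrite /plabel; case: ifP => // _; case: ifP => // /orP [/eqP -> | /eqP ->] _; by [left|right]. Qed.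
Lemma plabel0 p : plabel p != 0%N -> [\/ p = O, p = E | p = W].
Proof.
rewrite /plabel; case: ifP => [/eqP -> _|_]; first by constructor 1.
by case: ifP => // /orP [/eqP -> | /eqP ->] _; [constructor 2 | constructor 3].
Qed.
Lemma llabel1 l : llabel l = 1%N -> l = Linf.
Proof. by rewrite /llabel; case: ifP => [/eqP //|_]; case: ifP. Qed.
Lemma llabel2 l : llabel l = 2%N -> l = L2.
Proof. by rewrite /llabel; case: ifP => // _; case: ifP => // /eqP. Qed.
Lemma llabel0 l : llabel l != 0%N -> l = Linf \/ l = L2.
Proof.
rewrite /llabel; case: ifP => [/eqP -> _|_]; first by left.
by case: ifP => // /eqP -> _; right.
Qed.

Lemma col_proper : proper_coloring adj colV.
Proof.
move=> u v; rewrite adjE => a; apply/eqP => /(congr1 val) /= e; move: a e.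
rewrite /colN; case: ifP => pu.
  move=> /andP [/negbTE pv sv]; rewrite pv /colF.
  have := idx_ltP pu; have := idx_ltL (negbT pv).
  case: ifP => c1; case: ifP => c2; try lia.
  move=> _ _ _.
  have /plabel0 : plabel (sub u) != 0%N by move: c1; case: (plabel _) => [|[|[|]]].
  have /llabel0 : llabel (sub v) != 0%N by move: c2; case: (llabel _) => [|[|[|]]].
  by case=> hv [] hu; move: sv; rewrite hu hv; apply/negP;
    [exact: nO_Linf | exact: nE_Linf | exact: nW_Linf | exact: nO_L2 | exact: nE_L2 | exact: nW_L2].
move=> /andP [pv sv]; rewrite pv /colF.
have := idx_ltP pv; have := idx_ltL (negbT pu).
case: ifP => c1; case: ifP => c2; try lia.
move=> _ _ _.
have /plabel0 : plabel (sub v) != 0%N by move: c2; case: (plabel _) => [|[|[|]]].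
have /llabel0 : llabel (sub u) != 0%N by move: c1; case: (llabel _) => [|[|[|]]].
by case=> hv [] hu; move: sv; rewrite hu hv; apply/negP;
    [exact: nO_Linf | exact: nE_Linf | exact: nW_Linf | exact: nO_L2 | exact: nE_L2 | exact: nW_L2].
Qed.

Lemma hr0 : (0 < r)%N. Proof. by apply: leq_trans hr. Qed.
Lemma hs0 : (0 < s)%N. Proof. by apply: leq_trans hs. Qed.
Definition ii0 : 'I_r := Ordinal hr0.
Definition ii1 : 'I_r := Ordinal hr.
Definition jj0 : 'I_s := Ordinal hs0.
Definition jj1 : 'I_s := Ordinal hs.

Lemma adj_opp (u v : V) : adj u v -> isP u = ~~ isP v.
Proof. by rewrite adjE; case: (isP u); case: (isP v). Qed.

Lemma dwit (v : V) : colN v = (r + s)%N -> exists w : V, adj v w /\ colN w != (r + s)%N.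
Proof.
rewrite /colN; case: ifP => pv.
  move=> /colF_e; have := idx_ltP pv => lt /(_ ltac:(lia)) hd.
  have nz : plabel (sub v) != 0%N by move: hd; case: (plabel _) => [|[|[|]]].
  have [l [hl sl]] : exists l, dim2 l /\ sub v \subset l.
    case/plabel0: nz => ->; [exists OY; split; [exact: dOY | inc_t]
                         | exists OE; split; [exact: dOE | inc_t]
                         | exists OY; split; [exact: dOY | inc_t]].
  exists (mkL hl (if llabel l == 1%N then jj1 else jj0)); split.
    by rewrite adjE pv /=.
  rewrite /colN /= /colF.
  by case: (llabel l) (llabel_lt l) => [|[|[|]]] //= _; rewrite /idx /=; lia.
move=> /colF_e; have := idx_ltL (negbT pv) => lt /(_ ltac:(lia)) hd.
have nz : llabel (sub v) != 0%N by move: hd; case: (llabel _) => [|[|[|]]].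
have [p [hp sp]] : exists p, dim1 p /\ p \subset sub v.
  case/llabel0: nz => ->; [exists X; split; [exact: dX | inc_t]
                        | exists Y; split; [exact: dY | inc_t]].
exists (mkP hp (if plabel p == 1%N then ii1 else ii0)); split.
  by rewrite adjE pv /=.
rewrite /colN /= /colF.
by case: (plabel p) (plabel_lt p) => [|[|[|]]] //= _; rewrite /idx /=; lia.
Qed.

Lemma colN_mkP p (hp : dim1 p) i : colN (mkP hp i) = colF (r + s) (plabel p) i 0.
Proof. by []. Qed.
Lemma colN_mkL l (hl : dim2 l) j : colN (mkL hl j) = colF (r + s) (llabel l) j r.
Proof. by []. Qed.
Lemma colN_P v : isP v -> colN v = colF (r + s) (plabel (sub v)) (idx v) 0.
Proof. by rewrite /colN => ->. Qed.
Lemma colN_L v : ~~ isP v -> colN v = colF (r + s) (llabel (sub v)) (idx v) r.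
Proof. by rewrite /colN => /negbTE ->. Qed.

Section Dist.
Variable f : {perm V}.
Hypothesis hf : is_graph_aut adj f.
Hypothesis hc : forall v, colV (f v) = colV v.

Lemma hcN v : colN (f v) = colN v.
Proof. by have := congr1 val (hc v). Qed.

Lemma side_ne v : colN v != (r + s)%N -> isP (f v) = isP v.
Proof.
move=> ne; have := hcN v; move: ne; rewrite /colN.
case pv: (isP v); case pf: (isP (f v)) => //.
  have := idx_ltP pv; have := idx_ltL (negbT pf); rewrite /colF.
  by case: ifP => _; case: ifP => _; lia.
have := idx_ltL (negbT pv); have := idx_ltP pf; rewrite /colF.
by case: ifP => _; case: ifP => _; lia.
Qed.

Lemma side v : isP (f v) = isP v.
Proof.
case: (eqVneq (colN v) (r + s)%N) => [he|hne]; last exact: side_ne.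
case: (dwit he) => w [a nw].
have := side_ne nw; rewrite (adj_opp a).
have : adj (f v) (f w) by rewrite hf.
by move/adj_opp => ->; case: (isP (f w)); case: (isP w).
Qed.


Lemma plab_pres p (hp : dim1 p) : plabel p != 0%N ->
  plabel (sub (f (mkP hp ii0))) = plabel p.
Proof.
move=> nz.
have p0 : isP (f (mkP hp ii0)) by rewrite side.
have p1 : isP (f (mkP hp ii1)) by rewrite side.
have e01 : sub (f (mkP hp ii1)) = sub (f (mkP hp ii0)) by apply: (twinP hs0 hf side).
have c0 := hcN (mkP hp ii0); have c1 := hcN (mkP hp ii1).
rewrite colN_mkP colN_P // in c0; rewrite colN_mkP colN_P // e01 in c1.
have l0 := idx_ltP p0; have l1 := idx_ltP p1.
apply: (colF_label _ _ _ (plabel_lt _) (plabel_lt _) nz c0 c1); lia.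
Qed.

Lemma llab_pres l (hl : dim2 l) : llabel l != 0%N ->
  llabel (sub (f (mkL hl jj0))) = llabel l.
Proof.
move=> nz.
have p0 : ~~ isP (f (mkL hl jj0)) by rewrite side.
have p1 : ~~ isP (f (mkL hl jj1)) by rewrite side.
have e01 : sub (f (mkL hl jj1)) = sub (f (mkL hl jj0)) by apply: (twinL hr0 hf side).
have c0 := hcN (mkL hl jj0); have c1 := hcN (mkL hl jj1).
rewrite colN_mkL colN_L // in c0; rewrite colN_mkL colN_L // e01 in c1.
have l0 := idx_ltL p0; have l1 := idx_ltL p1.
apply: (colF_label _ _ _ (llabel_lt _) (llabel_lt _) nz c0 c1); lia.
Qed.

Local Notation fixd := (@fixd q r s f).

Lemma fixP_of p (hp : dim1 p) : sub (f (mkP hp ii0)) = p -> fixd true p.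
Proof.
move=> e v pv sv; rewrite -e; apply: (twinP hs0 hf side) => //.
Qed.
Lemma fixL_of l (hl : dim2 l) : sub (f (mkL hl jj0)) = l -> fixd false l.
Proof.
move=> e v pv sv; rewrite -e; apply: (twinL hr0 hf side) => //; by rewrite pv.
Qed.

Lemma fixO : fixd true O.
Proof.
apply: (@fixP_of O dO); apply: plabel1; rewrite plab_pres plabelO //.
Qed.
Lemma fixLinf : fixd false Linf.
Proof.
apply: (@fixL_of Linf dLinf); apply: llabel1; rewrite llab_pres llabelLinf //.
Qed.
Lemma fixL2 : fixd false L2.
Proof.
apply: (@fixL_of L2 dL2); apply: llabel2; rewrite llab_pres llabelL2 //.
Qed.

Local Notation jf := (join_fix hr0 hf side).
Local Notation mf := (meet_fix hs0 hf side).

Lemma fixY : fixd true Y.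
Proof.
apply: (mf dY dLinf dL2 LinfneL2); [inc_t | inc_t | exact: fixLinf | exact: fixL2].
Qed.

Lemma OneY : O != Y.
Proof. rewrite eq_sym; apply: (@ptne _ _ (cv3 0 0 1)); [inc_t | ninc_t]. Qed.

Lemma fixOY : fixd false OY.
Proof. apply: (jf dO dY dOY OneY); [inc_t | inc_t | exact: fixO | exact: fixY]. Qed.

Lemma fixW : fixd true W.
Proof.
apply: (@fixP_of W dW).
have := plab_pres dW; rewrite plabelW => /(_ isT) /plabel2 [] // hE.
have : sub (f (mkP dW ii0)) \subset sub (f (mkL dOY jj0)).
  by apply: (inc_f hf side) => //=; inc_t.
rewrite hE (@fixOY (mkL dOY jj0)) //.
have : ~~ (E \subset OY) by ninc_t.
by move/negP.
Qed.

Lemma fixE : fixd true E.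
Proof.
apply: (@fixP_of E dE).
have := plab_pres dE; rewrite plabelE => /(_ isT) /plabel2 [] // hW.
exfalso; move/eqP: EneW; apply.
set u := mkP dE ii1; set w := mkP dW ii1.
have pu : isP (f u) by rewrite side.
have pw : isP (f w) by rewrite side.
have su : sub (f u) = W by rewrite -hW; apply: (twinP hs0 hf side).
have sw : sub (f w) = W by apply: fixW.
have cu := hcN u; have cw := hcN w.
rewrite colN_mkP colN_P // plabelE su plabelW in cu.
rewrite colN_mkP colN_P // sw plabelW in cw.
have iu := idx_ltP pu; have iw := idx_ltP pw.
have /colF_e hu : colF (r + s) 2 (idx (f u)) 0 = (r + s)%N by rewrite cu /colF.
have /colF_e hw : colF (r + s) 2 (idx (f w)) 0 = (r + s)%N by rewrite cw /colF.
have eu : idx (f u) = 1%N by apply/eqP; move: (hu ltac:(lia)).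
have ew : idx (f w) = 1%N by apply/eqP; move: (hw ltac:(lia)).
have : f u = f w by apply: vertex_eq; rewrite ?pu ?pw ?su ?sw ?eu ?ew.
by move/perm_inj/(congr1 sub).
Qed.

Lemma fixOE : fixd false OE.
Proof. apply: (jf dO dE dOE OneE); [inc_t | inc_t | exact: fixO | exact: fixE]. Qed.

Lemma fixX : fixd true X.
Proof.
have ne : OE != Linf by apply: (@lnne (rv3 0 0 1)); [inc_t | ninc_t].
apply: (mf dX dOE dLinf ne); [inc_t | inc_t | exact: fixOE | exact: fixLinf].
Qed.

Lemma fixWX : fixd false WX.
Proof.
have ne : W != X by rewrite eq_sym; apply: (@ptne _ _ (cv3 0 0 1)); [inc_t | ninc_t].
apply: (jf dW dX dWX ne); [inc_t | inc_t | exact: fixW | exact: fixX].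
Qed.

Lemma fixEY : fixd false EY.
Proof.
have ne : E != Y by rewrite eq_sym; apply: (@ptne _ _ (cv3 0 0 1)); [inc_t | ninc_t].
apply: (jf dE dY dEY ne); [inc_t | inc_t | exact: fixE | exact: fixY].
Qed.

Lemma fixWp : fixd true Wp.
Proof.
have ne : WX != EY by apply: (@lnne (rv3 1 0 0)); [inc_t | ninc_t].
apply: (mf dWp dWX dEY ne); [inc_t | inc_t | exact: fixWX | exact: fixEY].
Qed.

Lemma stepx a : fixd true (pt (rv3 a 0 1)) -> fixd true (pt (rv3 (a + 1) 0 1)).
Proof.
move=> h.
have dPa : dim1 (pt (rv3 a 0 1)) by apply: pt_dim; apply: nzr; rewrite one_nz orbT.
have dPa1 : dim1 (pt (rv3 (a + 1) 0 1)) by apply: pt_dim; apply: nzr; rewrite one_nz orbT.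
have dl1 : dim2 (ln (cv3 (-1) (-a) a)) by apply: ln_dim; apply: nzc; rewrite m1_nz.
have dM : dim1 (pt (rv3 (-a) 1 0)) by apply: pt_dim; apply: nzr; rewrite one_nz orbT.
have dl3 : dim2 (ln (cv3 (-1) (-a) (1 + a))) by apply: ln_dim; apply: nzc; rewrite m1_nz.
have ne1 : pt (rv3 a 0 1) != W by apply: (@ptne _ _ (cv3 0 1 0)); [inc_t | ninc_t].
have fl1 : fixd false (ln (cv3 (-1) (-a) a)).
  by apply: (jf dPa dW dl1 ne1); [inc_t | inc_t | exact: h | exact: fixW].
have ne2 : ln (cv3 (-1) (-a) a) != Linf by apply: (@lnne (rv3 a 0 1)); [inc_t | ninc_t].
have fM : fixd true (pt (rv3 (-a) 1 0)).
  by apply: (mf dM dl1 dLinf ne2); [inc_t | inc_t | exact: fl1 | exact: fixLinf].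
have ne3 : Wp != pt (rv3 (-a) 1 0) by rewrite eq_sym; apply: (@ptne _ _ (cv3 0 0 1)); [inc_t | ninc_t].
have fl3 : fixd false (ln (cv3 (-1) (-a) (1 + a))).
  by apply: (jf dWp dM dl3 ne3); [inc_t | inc_t | exact: fixWp | exact: fM].
have ne4 : ln (cv3 (-1) (-a) (1 + a)) != OE by apply: (@lnne (rv3 1 1 1)); [inc_t | ninc_t].
by apply: (mf dPa1 dl3 dOE ne4); [inc_t | inc_t | exact: fl3 | exact: fixOE].
Qed.

Lemma stepy b : fixd true (pt (rv3 0 b 1)) -> fixd true (pt (rv3 0 (b + 1) 1)).
Proof.
move=> h.
have dQb : dim1 (pt (rv3 0 b 1)) by apply: pt_dim; apply: nzr; rewrite one_nz orbT.
have dQb1 : dim1 (pt (rv3 0 (b + 1) 1)) by apply: pt_dim; apply: nzr; rewrite one_nz orbT.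
have dl1 : dim2 (ln (cv3 b 1 (-b))) by apply: ln_dim; apply: nzc; rewrite one_nz orbT.
have dM : dim1 (pt (rv3 1 (-b) 0)) by apply: pt_dim; apply: nzr; rewrite one_nz.
have dl3 : dim2 (ln (cv3 b 1 (- b - 1))) by apply: ln_dim; apply: nzc; rewrite one_nz orbT.
have ne1 : pt (rv3 0 b 1) != E by apply: (@ptne _ _ (cv3 1 0 0)); [inc_t | ninc_t].
have fl1 : fixd false (ln (cv3 b 1 (-b))).
  by apply: (jf dQb dE dl1 ne1); [inc_t | inc_t | exact: h | exact: fixE].
have ne2 : ln (cv3 b 1 (-b)) != Linf by apply: (@lnne (rv3 1 0 1)); [inc_t | ninc_t].
have fM : fixd true (pt (rv3 1 (-b) 0)).
  by apply: (mf dM dl1 dLinf ne2); [inc_t | inc_t | exact: fl1 | exact: fixLinf].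
have ne3 : Wp != pt (rv3 1 (-b) 0) by rewrite eq_sym; apply: (@ptne _ _ (cv3 0 0 1)); [inc_t | ninc_t].
have fl3 : fixd false (ln (cv3 b 1 (- b - 1))).
  by apply: (jf dWp dM dl3 ne3); [inc_t | inc_t | exact: fixWp | exact: fM].
have ne4 : ln (cv3 b 1 (- b - 1)) != OY by apply: (@lnne (rv3 1 1 1)); [inc_t | ninc_t].
by apply: (mf dQb1 dl3 dOY ne4); [inc_t | inc_t | exact: fl3 | exact: fixOY].
Qed.

Lemma fix_x n : fixd true (pt (rv3 n%:R 0 1)).
Proof.
elim: n => [|n IH]; first by rewrite mulr0n; exact: fixO.
by rewrite mulrSr; apply: stepx.
Qed.

Lemma fix_y n : fixd true (pt (rv3 0 n%:R 1)).
Proof.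
elim: n => [|n IH]; first by rewrite mulr0n; exact: fixO.
by rewrite mulrSr; apply: stepy.
Qed.

Lemma fix_aff a b : fixd true (pt (rv3 a b 1)).
Proof.
have ha := @fix_x a; have hb := @fix_y b; rewrite natr_Zp in ha; rewrite natr_Zp in hb.
have dPa : dim1 (pt (rv3 a 0 1)) by apply: pt_dim; apply: nzr; rewrite one_nz orbT.
have dQb : dim1 (pt (rv3 0 b 1)) by apply: pt_dim; apply: nzr; rewrite one_nz orbT.
have dP : dim1 (pt (rv3 a b 1)) by apply: pt_dim; apply: nzr; rewrite one_nz orbT.
have dl1 : dim2 (ln (cv3 1 0 (-a))) by apply: ln_dim; apply: nzc; rewrite one_nz.
have dl2 : dim2 (ln (cv3 0 1 (-b))) by apply: ln_dim; apply: nzc; rewrite one_nz orbT.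
have ne1 : pt (rv3 a 0 1) != Y by rewrite eq_sym; apply: (@ptne _ _ (cv3 0 0 1)); [inc_t | ninc_t].
have ne2 : pt (rv3 0 b 1) != X by rewrite eq_sym; apply: (@ptne _ _ (cv3 0 0 1)); [inc_t | ninc_t].
have f1 : fixd false (ln (cv3 1 0 (-a))).
  by apply: (jf dPa dY dl1 ne1); [inc_t | inc_t | exact: ha | exact: fixY].
have f2 : fixd false (ln (cv3 0 1 (-b))).
  by apply: (jf dQb dX dl2 ne2); [inc_t | inc_t | exact: hb | exact: fixX].
have ne3 : ln (cv3 1 0 (-a)) != ln (cv3 0 1 (-b)) by apply: (@lnne (rv3 0 1 0)); [inc_t | ninc_t].
by apply: (mf dP dl1 dl2 ne3); [inc_t | inc_t | exact: f1 | exact: f2].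
Qed.

Lemma fix_inf c : fixd true (pt (rv3 1 c 0)).
Proof.
have dP : dim1 (pt (rv3 1 c 1)) by apply: pt_dim; apply: nzr; rewrite one_nz orbT.
have dP0 : dim1 (pt (rv3 1 c 0)) by apply: pt_dim; apply: nzr; rewrite one_nz.
have dl : dim2 (ln (cv3 c (-1) 0)) by apply: ln_dim; apply: nzc; rewrite m1_nz orbT.
have ne1 : O != pt (rv3 1 c 1) by apply: (@ptne _ _ (cv3 1 0 0)); [inc_t | ninc_t].
have fl : fixd false (ln (cv3 c (-1) 0)).
  by apply: (jf dO dP dl ne1); [inc_t | inc_t | exact: fixO | exact: fix_aff].
have ne2 : ln (cv3 c (-1) 0) != Linf by apply: (@lnne (rv3 0 0 1)); [inc_t | ninc_t].
by apply: (mf dP0 dl dLinf ne2); [inc_t | inc_t | exact: fl | exact: fixLinf].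
Qed.

Lemma fix_pts p : dim1 p -> fixd true p.
Proof.
case/pt_normal => [[a [b ->]] | [c ->] | ->]; [exact: fix_aff | exact: fix_inf | exact: fixY].
Qed.

Lemma fix_lns v : ~~ isP v -> sub (f v) = sub v.
Proof.
move=> lv.
have lf : ~~ isP (f v) by rewrite side.
symmetry; apply: (sub_same_dim (subL lv) (subL lf)); apply/subsetP => x xv.
have [-> | nz] := eqVneq x 0.
  by case/sdim_span: (subL lf) => B _ ->; rewrite inE sub0mx.
have dx := pt_dim nz.
have sx : pt x \subset sub v by apply: pt_sub => //; exact: subL.
have := @inc_f q r s f hf side (mkP dx ii0) v (erefl true) lv sx.
rewrite (@fix_pts _ dx (mkP dx ii0)) // => /subsetP; apply; exact: in_pt.
Qed.

Lemma f_id : f = 1%g.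
Proof.
apply/permP => v; rewrite perm1.
have pv := side v.
have sv : sub (f v) = sub v.
  case pv': (isP v); last by apply: fix_lns; rewrite pv'.
  by apply: (@fix_pts _ (subP pv')).
apply: vertex_eq => //.
have h := hcN v; case pv': (isP v).
  have pf : isP (f v) by rewrite pv pv'.
  rewrite (colN_P pf) (colN_P pv') sv in h.
  by apply: (colF_inj _ _ h); have := idx_ltP pf; have := idx_ltP pv'; lia.
have pf : ~~ isP (f v) by rewrite pv pv'.
have pv2 : ~~ isP v by rewrite pv'.
rewrite (colN_L pf) (colN_L pv2) sv in h.
by apply: (colF_inj _ _ h); have := idx_ltL pf; have := idx_ltL pv2; lia.
Qed.
End Dist. End Upper.


Section Lower.
Variables q r s k : nat.
Hypotheses (hr : (0 < r)%N) (hs : (0 < s)%N).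
Local Open Scope ring_scope.
Local Notation K := 'F_q.
Local Notation V := (LGK_vertex q r s).
Local Notation adj := (@LGK_adj q r s).
Local Notation dim1 := (@is_subspace_of_dim q 1).
Local Notation dim2 := (@is_subspace_of_dim q 2).
Local Notation mkP := (@mkP q r s).
Local Notation mkL := (@mkL q r s).
Local Notation isP := (@isP q r s).
Local Notation sub := (@sub q r s).
Local Notation idx := (@idx q r s).
Local Notation pt := (@pt q).
Local Notation ln := (@ln q).
Local Notation rv3 := (@rv3 q).
Local Notation cv3 := (@cv3 q).
Local Notation sig := (@sig q).

Variable c : V -> 'I_k.
Hypothesis hpr : proper_coloring adj c.
Hypothesis hdist : distinguishing adj c.

Lemma adj_same (x y x' y' : V) : isP x = isP x' -> sub x = sub x' -> isP y = isP y' -> sub y = sub y' ->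
  adj x y = adj x' y'.
Proof. by move=> a b c' d; rewrite !adjE a b c' d. Qed.

Lemma twin_distinct (u u' : V) : u != u' -> isP u = isP u' -> sub u = sub u' -> c u != c u'.
Proof.
move=> ne pe se; apply/eqP => ce.
have hpr' : forall x, isP (tperm u u' x) = isP x /\ sub (tperm u u' x) = sub x.
  by move=> x; case: tpermP => [->|->|] //.
have aut : is_graph_aut adj (tperm u u').
  by move=> x y; case: (hpr' x) => [a b]; case: (hpr' y) => [a' b']; apply: adj_same.
have col : forall x, c (tperm u u' x) = c x.
  by move=> x; case: tpermP => [->|->|].
have e0 := hdist aut col.
have : tperm u u' u = (1%g : {perm V}) u by rewrite e0.
rewrite tpermL perm1 => e.
by move: ne; rewrite e eqxx.
Qed.

Definition PS (p : {set vec q}) : {set V} := [set w : V | isP w && (sub w == p)].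
Definition LS (l : {set vec q}) : {set V} := [set w : V | ~~ isP w && (sub w == l)].
Definition colP (p : {set vec q}) := c @: PS p.
Definition colL (l : {set vec q}) := c @: LS l.

Lemma PS_card p (hp : dim1 p) : #|PS p| = r.
Proof.
have -> : PS p = [set mkP hp i | i : 'I_r].
  apply/setP => w; rewrite !inE; apply/andP/imsetP => [[pw /eqP sw] | [i _ ->]].
    exists (Ordinal (idx_ltP pw)) => //; apply: vertex_eq => //.
  by split => //.
rewrite card_imset ?card_ord //.
by move=> i j /(congr1 idx) /= /val_inj.
Qed.

Lemma LS_card l (hl : dim2 l) : #|LS l| = s.
Proof.
have -> : LS l = [set mkL hl j | j : 'I_s].
  apply/setP => w; rewrite !inE; apply/andP/imsetP => [[pw /eqP sw] | [j _ ->]].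
    exists (Ordinal (idx_ltL pw)) => //; apply: vertex_eq => //; by rewrite (negbTE pw).
  by split => //.
rewrite card_imset ?card_ord //.
by move=> i j /(congr1 idx) /= /val_inj.
Qed.

Lemma colP_card p (hp : dim1 p) : #|colP p| = r.
Proof.
rewrite card_in_imset ?PS_card // => x y; rewrite !inE => /andP [px /eqP sx] /andP [py /eqP sy] e.
apply/eqP/negPn/negP => ne; move: (twin_distinct ne) => /(_ _ _)/eqP; apply => //.
  by rewrite px py.
by rewrite sx sy.
Qed.

Lemma colL_card l (hl : dim2 l) : #|colL l| = s.
Proof.
rewrite card_in_imset ?LS_card // => x y; rewrite !inE => /andP [px /eqP sx] /andP [py /eqP sy] e.
apply/eqP/negPn/negP => ne; move: (twin_distinct ne) => /(_ _ _)/eqP; apply => //.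
  by rewrite (negbTE px) (negbTE py).
by rewrite sx sy.
Qed.

Lemma disj (p l : {set vec q}) : p \subset l -> colP p :&: colL l = set0.
Proof.
move=> pl; apply/setP => x; rewrite !inE; apply/andP => [[/imsetP [u] ]].
rewrite inE => /andP [pu /eqP su] -> /imsetP [w]; rewrite inE => /andP [pw /eqP sw] e.
have : adj u w by rewrite adjE pu pw su sw.
by move/hpr; rewrite e eqxx.
Qed.

Lemma k_ge (p l : {set vec q}) : dim1 p -> dim2 l -> p \subset l -> (r + s <= k)%N.
Proof.
move=> hp hl pl.
have := max_card (mem (colP p :|: colL l)); rewrite card_ord cardsU disj // cards0 subn0.
by rewrite colP_card // colL_card.
Qed.

Hypothesis hk : k = (r + s)%N.

Lemma colP_compl (p l : {set vec q}) : dim1 p -> dim2 l -> p \subset l -> colP p = ~: colL l.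
Proof.
move=> hp hl pl; apply/eqP; rewrite eqEcard; apply/andP; split.
  apply/subsetP => x xp; rewrite inE; apply/negP => xl.
  by have := disj pl; move/setP/(_ x); rewrite !inE xp xl.
have := cardsCs (colL l); rewrite card_ord colL_card // colP_card //.
move: (#|~: colL l|) => n h; have := hk; lia.
Qed.


Lemma colP_eq (p p' : {set vec q}) : dim1 p -> dim1 p' -> colP p = colP p'.
Proof.
move=> hp hp'; have [-> //|ne] := eqVneq p p'.
case: (join_ex2 hp hp' ne) => l [hl s1 s2].
by rewrite (colP_compl hp hl s1) (colP_compl hp' hl s2).
Qed.

Lemma colL_eq (l l' : {set vec q}) : dim2 l -> dim2 l' -> colL l = colL l'.
Proof.
move=> hl hl'; case: (meet_ex hl hl') => p [hp s1 s2].
by apply: setC_inj; rewrite -(colP_compl hp hl s1) -(colP_compl hp hl' s2).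
Qed.

Lemma Fex (v : V) : exists w : V, [/\ isP w = isP v, sub w = sig (sub v) & c w = c v].
Proof.
case pv: (isP v).
  have hp := subP pv; have hp' := sig_dim hp.
  have : c v \in colP (sig (sub v)).
    by rewrite -(colP_eq hp hp'); apply: imset_f; rewrite inE pv eqxx.
  case/imsetP => w; rewrite inE => /andP [pw /eqP sw] e.
  by exists w; split.
have hl := subL (negbT pv); have hl' := sig_dim hl.
have : c v \in colL (sig (sub v)).
  by rewrite -(colL_eq hl hl'); apply: imset_f; rewrite inE pv eqxx.
case/imsetP => w; rewrite inE => /andP [pw /eqP sw] e.
by exists w; split => //; apply: negbTE.
Qed.

Definition Fd (v : V) : V :=
  odflt v [pick w | (isP w == isP v) && (sub w == sig (sub v)) && (c w == c v)].

Lemma Fspec v : [/\ isP (Fd v) = isP v, sub (Fd v) = sig (sub v) & c (Fd v) = c v].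
Proof.
rewrite /Fd; case: pickP => [w /andP [/andP [/eqP a /eqP b] /eqP d] | none] /=; first by split.
case: (Fex v) => w [a b d]; move: (none w); by rewrite a b d !eqxx.
Qed.

Lemma Finj : injective Fd.
Proof.
move=> v v' e.
case: (Fspec v) => a b d; case: (Fspec v') => a' b' d'.
apply/eqP/negPn/negP => ne.
have : c v != c v'.
  apply: twin_distinct => //; first by rewrite -a -a' e.
  by apply: sig_inj; rewrite -b -b' e.
by rewrite -d -d' e eqxx.
Qed.

Lemma no_dist : False.
Proof.
set F := perm Finj.
have aut : is_graph_aut adj F.
  move=> x y; rewrite !permE !adjE.
  case: (Fspec x) => -> -> _; case: (Fspec y) => -> -> _.
  by rewrite !sig_sub.
have col : forall x, c (F x) = c x by move=> x; rewrite permE; case: (Fspec x).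
have e0 := hdist aut col.
have hX : dim1 (pt (rv3 1 0 0)).
  by apply: pt_dim; rewrite rv3_eq0 (negbTE (@oner_neq0 K)).
set u := mkP hX (Ordinal hr).
have : F u = (1%g : {perm V}) u by rewrite e0.
rewrite perm1 permE => /(congr1 sub); case: (Fspec u) => _ -> _ /=.
rewrite /= sigX => e.
have : pt (rv3 0 1 0) \subset ln (cv3 1 0 0) by rewrite inc3; apply/eqP; ring.
rewrite e inc3 mul1r !mul0r !addr0; apply/negP; exact: oner_neq0.
Qed.

End Lower.

Unset Implicit Arguments.

Theorem mainTheorem13 (q r s : nat) :
  prime q -> (5 <= q)%N -> (2 <= r)%N -> (2 <= s)%N ->
  chiD_is (@LGK_adj q r s) (r + s + 1).
Proof.
move=> pq q5 hr hs.
have htwo : ((2%:R : 'F_q) != 0)%R.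
  rewrite -(dvdn_pcharf (pchar_Fp pq)); apply/negP => /dvdn_leq h.
  by have := h isT; lia.
split.
  exists (colV hr hs htwo); split; first exact: col_proper.
  by move=> f hf hc; apply: (f_id hf hc).
move=> k hk [c [hpr hdist]].
have r0 : (0 < r)%N by lia.
have s0 : (0 < s)%N by lia.
have kge : (r + s <= k)%N.
  apply: (k_ge hpr hdist (dO q) (dOY q)).
  by rewrite /O /OY inc3; apply/eqP; ring.
by apply: (no_dist r0 s0 hpr hdist); lia.
Qed.
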